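(* Let $X$ be a regular space. Then $X$ is set star compact if and only if $X$ is countably compact.
   Context: For a family $\mathcal U$ of subsets of $X$ and $A\subseteq X$, $st(A,\mathcal U)=\bigcup\{U\in\mathcal U: U\cap A\neq\emptyset\}$. A space $X$ is set star compact if for every nonempty $A\subseteq X$ and every family $\mathcal U$ of open subsets of $X$ with $\overline A\subseteq\bigcup\mathcal U$ there is a finite $\mathcal V\subseteq\mathcal U$ with $A\subseteq st(\bigcup\mathcal V,\mathcal U)$. No separation axioms are assumed beyond those stated. *)

(* Defs.v *)
From HB Require Import structures.
From mathcomp Require Import all_boot all_order.
From mathcomp Require Import all_classical all_reals all_analysis.
Set Implicit Arguments. Unset Strict Implicit. Unset Printing Implicit Defensive.
Local Open Scope classical_set_scope.

Definition star {T : Type} (A : set T) (U : set (set T)) : set T :=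
  \bigcup_(V in [set V | U V /\ V `&` A !=set0]) V.

Definition set_star_compact (T : topologicalType) : Prop :=
  forall (A : set T) (U : set (set T)),
    A !=set0 -> (forall V, U V -> open V) ->
    closure A `<=` \bigcup_(V in U) V ->
    exists W : set (set T),
      [/\ finite_set W, W `<=` U & A `<=` star (\bigcup_(V in W) V) U].

Definition countably_compact (T : topologicalType) : Prop :=
  forall U : set (set T),
    countable U -> (forall V, U V -> open V) ->
    [set: T] `<=` \bigcup_(V in U) V ->
    exists W : set (set T),
      [/\ finite_set W, W `<=` U & [set: T] `<=` \bigcup_(V in W) V].

(* Main.v *)
Require Import Defs.
From mathcomp Require Import all_boot all_order.
From mathcomp Require Import all_classical all_reals all_analysis.
From mathcomp Require Import finmap.
Local Open Scope classical_set_scope.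

Lemma cc_cluster (T : topologicalType) (x : nat -> T) : countably_compact T ->
  exists p, forall n, closure (x @` [set m | (n <= m)%N]) p.
Proof.
move=> cc; apply: contrapT => Hn.
pose O n := ~` closure (x @` [set m | (n <= m)%N]).
have cov : [set: T] `<=` \bigcup_(V in range O) V.
  move=> p _; have [n np] : exists n, ~ closure (x @` [set m | (n <= m)%N]) p.
    by apply: contrapT => H; apply: Hn; exists p => n; apply: contrapT => H'; apply: H; exists n.
  by exists (O n) => //; exists n.
have cO : countable (range O) by exact: card_image_le.
have oO : forall V, range O V -> open V.
  by move=> _ [n _ <-]; apply: closed_openC; exact: closed_closure.
have [W [fW WO cW]] := cc _ cO oO cov.
have [kf hkf] : {kf : set T -> nat & forall V, W V -> O (kf V) = V}.
  apply: (@choice _ _ (fun V k => W V -> O k = V)) => V.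
  have [/WO [k _ <-]|nW] := pselect (W V); first by exists k.
  by exists 0%N.
have [B eB] := (finite_fsetP.1 (finite_image kf fW)).
pose N := (\max_(i <- B) i)%N.
have [V WV VxN] := cW (x N) I.
have kB : kf V \in B by have : [set` B] (kf V) by rewrite -eB; exists V.
have leN : (kf V <= N)%N by have := @leq_bigmax_seq _ (enum_fset B) xpredT (fun i => i) (kf V) kB isT; exact.
move: VxN; rewrite -(hkf V WV) /O /=; apply; apply: subset_closure.
by exists N.
Qed.

Lemma cc_ssc (T : topologicalType) : countably_compact T -> set_star_compact T.
Proof.
move=> cc A U [a0 Aa0] oU cAU.
apply: contrapT => H.
have H' : forall W, finite_set W -> W `<=` U -> exists a, A a /\ ~ star (\bigcup_(V in W) V) U a.
  move=> W fW WU; apply: contrapT => nE; apply: H; exists W; split => // a Aa.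
  by apply: contrapT => ns; apply: nE; exists a.
have [g hg] : {g : set (set T) -> T & forall W, finite_set W -> W `<=` U ->
    A (g W) /\ ~ star (\bigcup_(V in W) V) U (g W)}.
  apply: (@choice _ _ (fun W a => finite_set W -> W `<=` U -> A a /\ ~ star (\bigcup_(V in W) V) U a)) => W.
  have [[fW WU]|nW] := pselect (finite_set W /\ W `<=` U).
    by have [a ha] := H' W fW WU; exists a.
  by exists a0 => fW WU; exfalso; apply: nW.
have [h hh] : {h : T -> set T & forall a, A a -> U (h a) /\ h a a}.
  apply: (@choice _ _ (fun a V => A a -> U V /\ V a)) => a.
  have [Aa|nA] := pselect (A a).
    by have [V UV Va] := cAU a (subset_closure Aa); exists V.
  by exists setT.
pose Wn k := iter k (fun W => W `|` [set h (g W)]) set0.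
have inv : forall k, finite_set (Wn k) /\ Wn k `<=` U.
  elim=> [|k [fk sk]] /=; first by split => //; exact: finite_set0.
  have [Ag _] := hg _ fk sk.
  split; first by rewrite finite_setU; split => //; exact: finite_set1.
  by move=> V [/sk //|->]; exact: (hh _ Ag).1.
pose x k := g (Wn k).
have Ax : forall k, A (x k) by move=> k; have [fk sk] := inv k; exact: (hg _ fk sk).1.
have mono : forall n m, (n <= m)%N -> Wn n `<=` Wn m.
  move=> n m /subnK <-; elim: (m - n)%N => [|k IH] //= V /IH; by left.
have hin : forall n m, (n < m)%N -> Wn m (h (x n)).
  by move=> n m nm; apply: (mono n.+1 m nm); right.
have [p hp] := @cc_cluster T x cc.
have pA : closure A p.
  by apply: (closureS _ (hp 0%N)) => _ [m _ <-]; exact: Ax.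
have [V UV Vp] := cAU p pA.
have nV : nbhs p V by apply: open_nbhs_nbhs; split => //; exact: oU.
have [_ [[n _ <-] Vxn]] := hp 0%N V nV.
have [_ [[m nm <-] Vxm]] := hp n.+1 V nV.
have [fm sm] := inv m.
apply: (hg _ fm sm).2; exists V => //; split => //.
exists (x n); split => //; exists (h (x n)); first exact: hin.
exact: (hh _ (Ax n)).2.
Qed.

Lemma reg_cl (T : topologicalType) (a : T) (B : set T) : regular_space T ->
  nbhs a B -> exists2 C, nbhs a C & closure C `<=` B.
Proof. by move=> reg nB; have := reg a B nB. Qed.

Lemma fin_inj (T : Type) (U : set (set T)) (f : set T -> nat) n :
  {in U &, injective f} -> finite_set [set V | U V /\ (f V <= n)%N].
Proof.
move=> finj.
have fi : {in [set V | U V /\ (f V <= n)%N] &, injective f}.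
  move=> V1 V2 /set_mem [U1 _] /set_mem [U2 _]; apply: finj; exact: mem_set.
move: fi => /Pinj[i ei].
rewrite -(eq_finite_set (card_image i)) -ei.
apply: (@sub_finite_set _ _ `I_n.+1) => //.
by move=> _ [V [_ le] <-] /=; rewrite ltnS.
Qed.

Lemma ssc_cc (T : topologicalType) : regular_space T -> set_star_compact T ->
  countably_compact T.
Proof.
move=> reg ssc U cU oU cov; apply: contrapT => H.
have /countable_injP [f finj] := cU.
pose Wn n := [set V | U V /\ (f V <= n)%N].
pose Vn n := \bigcup_(V in Wn n) V.
have oV : forall n, open (Vn n).
  by move=> n; apply: bigcup_open => V [UV _]; exact: oU.
have monoV : forall n m, (n <= m)%N -> Vn n `<=` Vn m.
  move=> n m nm y [V [UV le] Vy]; exists V => //; split => //.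
  exact: leq_trans nm.
have covV : forall p, exists n, Vn n p.
  by move=> p; have [V UV Vp] := cov p I; exists (f V); exists V.
have notall : forall n, exists y, ~ Vn n y.
  move=> n; apply: contrapT => nn; apply: H; exists (Wn n); split.
  - exact: fin_inj.
  - by move=> V [].
  - by move=> y _; apply: contrapT => ny; apply: nn; exists y.
have [x hx] : {x : nat -> T & forall n, ~ Vn n (x n)}.
  by apply: (@choice _ _ (fun n y => ~ Vn n y)).
have step : forall s : nat * set T, exists q : nat * set T,
    (open s.2 /\ closure s.2 `<=` Vn s.1) ->
    [/\ q.2 (x s.1), open q.2, q.2 `&` s.2 = set0, closure q.2 `<=` Vn q.1
      & (s.1 <= q.1)%N].
  move=> [m S]; have [[oS cS]|nI] := pselect (open S /\ closure S `<=` Vn m); last first.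
    by exists (0%N, set0) => hI; exfalso; apply: nI.
  have [n Vnx] := covV (x m).
  pose N := Vn n `&` ~` closure S.
  have nN : nbhs (x m) N.
    apply: open_nbhs_nbhs; split.
      by apply: openI; [exact: oV | apply: closed_openC; exact: closed_closure].
    by split => // c; apply: (hx m); apply: cS.
  have [C nC cC] := @reg_cl T _ _ reg nN.
  exists (maxn n m, C°) => _ /=; split.
  - exact: nbhs_singleton (nbhs_interior nC).
  - exact: open_interior.
  - apply/seteqP; split => // y [Cy Sy].
    have [_ nS] := cC y (closureS (@interior_subset _ C) (subset_closure Cy)).
    by apply: nS; apply: subset_closure.
  - move=> y /(closureS (@interior_subset _ C)) /cC [Vy _].
    by apply: monoV Vy; exact: leq_maxl.
  - exact: leq_maxr.
have [nxt hnxt] := choice step.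
pose s k := iter k (fun s => ((nxt s).1, s.2 `|` (nxt s).2)) (0%N, set0).
have inv : forall k, open (s k).2 /\ closure (s k).2 `<=` Vn (s k).1.
  elim=> [|k [ok ck]] /=; first by split; [exact: open0 | rewrite closure0].
  have [_ oq _ cq le] := hnxt (s k) (conj ok ck).
  split; first exact: openU.
  by rewrite closureU => y [/ck /(monoV _ _ le)|/cq].
pose m k := (s k).1.
pose O k := (nxt (s k)).2.
pose a k := x (m k).
have P : forall k, [/\ O k (a k), open (O k), O k `&` (s k).2 = set0,
    closure (O k) `<=` Vn (m k.+1) & (m k <= m k.+1)%N].
  by move=> k; exact: hnxt (s k) (inv k).
have sinc : forall k l, (k <= l)%N -> (s k).2 `<=` (s l).2.
  move=> k l /subnK <-; elim: (l - k)%N => [|j IH] //= y /IH; by left.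
have Osub : forall k, O k `<=` (s k.+1).2 by move=> k y Oy; right.
have disj : forall i j, O i `&` O j !=set0 -> i = j.
  have lt : forall i j, (i < j)%N -> O i `&` O j !=set0 -> False.
    move=> i j ij [y [Oi Oj]]; have [_ _ e _ _] := P j.
    have : (O j `&` (s j).2) y by split => //; apply: (sinc i.+1 j ij); exact: Osub.
    by rewrite e.
  move=> i j hij; case: (ltngtP i j) => // ij; first by exfalso; exact: lt ij hij.
  by exfalso; apply: (lt j i ij); rewrite setIC.
have mlt : forall k, (m k < m k.+1)%N.
  move=> k; have [Oa _ _ cl le] := P k.
  rewrite ltn_neqAle le andbT; apply/eqP => e.
  apply: (hx (m k)); rewrite [X in Vn X]e; apply: cl; exact: subset_closure.
have kle : forall k, (k <= m k)%N.
  elim=> [|k IH] //; exact: (leq_ltn_trans IH (mlt k)).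
have [W [fW WO sW]] : exists W : set (set T),
    [/\ finite_set W, W `<=` range O & range a `<=` star (\bigcup_(V in W) V) (range O)].
  apply: ssc; first by exists (a 0%N); exists 0%N.
    by move=> _ [k _ <-]; have [] := P k.
  move=> p pA; apply: contrapT => np.
  have [n Vnp] := covV p.
  have away : forall k, nbhs p (fun y => y <> a k).
    move=> k; have [Oa oO _ _ _] := P k.
    have [C nC cC] := @reg_cl T _ _ reg (open_nbhs_nbhs (conj oO Oa)).
    have : ~ closure C p by move=> /cC Op; apply: np; exists (O k) => //; exists k.
    move=> /existsNP [B] /not_implyP [nB nCB].
    apply: filterS nB => y By eya; apply: nCB; exists y; split => //.
    by rewrite eya; exact: nbhs_singleton nC.
  have fin : forall n, nbhs p [set y | forall k, (k < n)%N -> y <> a k].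
    elim=> [|j IH]; first by apply: filterS filterT.
    apply: filterS (filterI IH (away j)) => y [h1 h2] k.
    rewrite ltnS leq_eqVlt => /orP [/eqP -> //|]; exact: h1.
  have nb : nbhs p (Vn n `&` [set y | forall k, (k < n)%N -> y <> a k]).
    by apply: filterI; [exact: open_nbhs_nbhs (conj (oV n) Vnp) | exact: fin].
  have [_ [[k _ <-] [Vak hk]]] := pA _ nb.
  case: (ltnP k n) => kn; first exact: (hk k kn).
  apply: (hx (m k)); apply: (monoV n) Vak; exact: leq_trans kn (kle k).
have allW : forall j, W (O j).
  move=> j; have [V [[i _ <-] [y [Oiy [Z WZ Zy]]]] Oiaj] := sW (a j) (ex_intro2 _ _ j I erefl).
  have ij : i = j by apply: disj; exists (a j); split => //; have [] := P j.
  have [l _ Zl] := WO Z WZ.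
  have il : i = l by apply: disj; exists y; split => //; rewrite Zl.
  by rewrite -ij il Zl.
have fO : finite_set (range O) by apply: sub_finite_set fW => _ [j _ <-].
have Oinj : {in O @^-1` range O &, injective O}.
  move=> i j _ _ e; apply: disj; exists (a i); split; first by have [] := P i.
  by rewrite -e; have [] := P i.
apply: infinite_nat.
have -> : [set: nat] = O @^-1` range O.
  by apply/seteqP; split => // k _; exists k.
exact: finite_preimage Oinj fO.
Qed.

Theorem proposition1p2 (T : topologicalType) :
  @regular_space T -> (set_star_compact T <-> countably_compact T).
Proof.
move=> reg; split; first exact: ssc_cc.
exact: cc_ssc.
Qed.
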